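(* For metric formulas $\varphi,\psi$, over strict timed traces, and for $m,n$ with $m>0$, the following hold in MHT: $\varphi\,\mathsf{U}_{[m,n)}\,\psi\equiv\Diamond_{[m,n)}\psi\wedge\Box_{[0,m)}(\varphi\,\mathsf{U}\,(\varphi\wedge\bigcirc\psi))$; $\varphi\,\mathsf{U}_{[m,n]}\,\psi\equiv\Diamond_{[m,n]}\psi\wedge\Box_{[0,m)}(\varphi\,\mathsf{U}\,(\varphi\wedge\bigcirc\psi))$; $\varphi\,\mathsf{U}_{(m,n)}\,\psi\equiv\Diamond_{(m,n)}\psi\wedge\Box_{[0,m]}(\varphi\,\mathsf{U}\,(\varphi\wedge\bigcirc\psi))$; $\varphi\,\mathsf{U}_{(m,n]}\,\psi\equiv\Diamond_{(m,n]}\psi\wedge\Box_{[0,m]}(\varphi\,\mathsf{U}\,(\varphi\wedge\bigcirc\psi))$; $\varphi\,\mathsf{U}_{[0,n)}\,\psi\equiv\Diamond_{[0,n)}\psi\wedge\varphi\,\mathsf{U}\,\psi$; $\varphi\,\mathsf{U}_{[0,n]}\,\psi\equiv\Diamond_{[0,n]}\psi\wedge\varphi\,\mathsf{U}\,\psi$; $\varphi\,\mathsf{U}_{(0,n)}\,\psi\equiv\Diamond_{(0,n)}\psi\wedge\varphi\,\mathsf{U}\,(\varphi\wedge\bigcirc\psi)$; $\varphi\,\mathsf{U}_{(0,n]}\,\psi\equiv\Diamond_{(0,n]}\psi\wedge\varphi\,\mathsf{U}\,(\varphi\wedge\bigcirc\psi)$; $\varphi\,\mathsf{R}_{[m,n)}\,\psi\equiv\Box_{[m,n)}\psi\vee\Diamond_{[0,m)}(\varphi\,\mathsf{R}\,(\varphi\vee\widehat{\bigcirc}\psi))$;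 $\varphi\,\mathsf{R}_{[m,n]}\,\psi\equiv\Box_{[m,n]}\psi\vee\Diamond_{[0,m)}(\varphi\,\mathsf{R}\,(\varphi\vee\widehat{\bigcirc}\psi))$; $\varphi\,\mathsf{R}_{(m,n)}\,\psi\equiv\Box_{(m,n)}\psi\vee\Diamond_{[0,m]}(\varphi\,\mathsf{R}\,(\varphi\vee\widehat{\bigcirc}\psi))$; $\varphi\,\mathsf{R}_{(m,n]}\,\psi\equiv\Box_{(m,n]}\psi\vee\Diamond_{[0,m]}(\varphi\,\mathsf{R}\,(\varphi\vee\widehat{\bigcirc}\psi))$; $\varphi\,\mathsf{R}_{[0,n)}\,\psi\equiv\Box_{[0,n)}\psi\vee\varphi\,\mathsf{R}\,\psi$; $\varphi\,\mathsf{R}_{[0,n]}\,\psi\equiv\Box_{[0,n]}\psi\vee\varphi\,\mathsf{R}\,\psi$; $\varphi\,\mathsf{R}_{(0,n)}\,\psi\equiv\Box_{(0,n)}\psi\vee\varphi\,\mathsf{R}\,(\varphi\vee\widehat{\bigcirc}\psi)$; $\varphi\,\mathsf{R}_{(0,n]}\,\psi\equiv\Box_{(0,n]}\psi\vee\varphi\,\mathsf{R}\,(\varphi\vee\widehat{\bigcirc}\psi)$; $\varphi\,\mathsf{S}_{[m,n)}\,\psi\equiv(\top\,\mathsf{S}_{[m,n)}\,\psi)\wedge\blacksquare_{[0,m)}(\varphi\,\mathsf{S}\,(\varphi\wedge\bullet\psi))$; $\varphi\,\mathsf{S}_{[m,n]}\,\psi\equiv(\top\,\mathsf{S}_{[m,n]}\,\psi)\wedge\blacksquare_{[0,m)}(\varphi\,\mathsf{S}\,(\varphi\wedge\bullet\psi))$;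 $\varphi\,\mathsf{S}_{(m,n)}\,\psi\equiv(\top\,\mathsf{S}_{(m,n)}\,\psi)\wedge\blacksquare_{[0,m]}(\varphi\,\mathsf{S}\,(\varphi\wedge\bullet\psi))$; $\varphi\,\mathsf{S}_{(m,n]}\,\psi\equiv(\top\,\mathsf{S}_{(m,n]}\,\psi)\wedge\blacksquare_{[0,m]}(\varphi\,\mathsf{S}\,(\varphi\wedge\bullet\psi))$; $\varphi\,\mathsf{S}_{[0,n)}\,\psi\equiv(\top\,\mathsf{S}_{[0,n)}\,\psi)\wedge\varphi\,\mathsf{S}\,\psi$; $\varphi\,\mathsf{S}_{[0,n]}\,\psi\equiv(\top\,\mathsf{S}_{[0,n]}\,\psi)\wedge\varphi\,\mathsf{S}\,\psi$; $\varphi\,\mathsf{S}_{(0,n)}\,\psi\equiv(\top\,\mathsf{S}_{(0,n)}\,\psi)\wedge\varphi\,\mathsf{S}\,(\varphi\wedge\bullet\psi)$; $\varphi\,\mathsf{S}_{(0,n]}\,\psi\equiv(\top\,\mathsf{S}_{(0,n]}\,\psi)\wedge\varphi\,\mathsf{S}\,(\varphi\wedge\bullet\psi)$; $\varphi\,\mathsf{T}_{[m,n)}\,\psi\equiv\blacksquare_{[m,n)}\psi\vee(\top\,\mathsf{S}_{[0,m)}\,(\varphi\,\mathsf{T}\,(\varphi\vee\widehat{\bullet}\psi)))$; $\varphi\,\mathsf{T}_{[m,n]}\,\psi\equiv\blacksquare_{[m,n]}\psi\vee(\top\,\mathsf{S}_{[0,m)}\,(\varphi\,\mathsf{T}\,(\varphi\vee\widehat{\bullet}\psi)))$;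 $\varphi\,\mathsf{T}_{(m,n)}\,\psi\equiv\blacksquare_{(m,n)}\psi\vee(\top\,\mathsf{S}_{[0,m]}\,(\varphi\,\mathsf{T}\,(\varphi\vee\widehat{\bullet}\psi)))$; $\varphi\,\mathsf{T}_{(m,n]}\,\psi\equiv\blacksquare_{(m,n]}\psi\vee(\top\,\mathsf{S}_{[0,m]}\,(\varphi\,\mathsf{T}\,(\varphi\vee\widehat{\bullet}\psi)))$; $\varphi\,\mathsf{T}_{[0,n)}\,\psi\equiv\blacksquare_{[0,n)}\psi\vee\varphi\,\mathsf{T}\,\psi$; $\varphi\,\mathsf{T}_{[0,n]}\,\psi\equiv\blacksquare_{[0,n]}\psi\vee\varphi\,\mathsf{T}\,\psi$; $\varphi\,\mathsf{T}_{(0,n)}\,\psi\equiv\blacksquare_{(0,n)}\psi\vee\varphi\,\mathsf{T}\,(\varphi\vee\widehat{\bullet}\psi)$; $\varphi\,\mathsf{T}_{(0,n]}\,\psi\equiv\blacksquare_{(0,n]}\psi\vee\varphi\,\mathsf{T}\,(\varphi\vee\widehat{\bullet}\psi)$.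
   Context: Metric formulas over $\mathcal{A}$: $\varphi ::= p \mid \bot \mid \varphi_1\otimes\varphi_2 \mid \bullet_I\varphi \mid \varphi_1\,\mathsf{S}_I\,\varphi_2 \mid \varphi_1\,\mathsf{T}_I\,\varphi_2 \mid \bigcirc_I\varphi \mid \varphi_1\,\mathsf{U}_I\,\varphi_2 \mid \varphi_1\,\mathsf{R}_I\,\varphi_2$, $\otimes\in\{\to,\wedge,\vee\}$; intervals are sets of naturals ($[m,n)$, $[m,n]$, $(m,n)$, $(m,n]$ with the usual meaning); an omitted subscript means $[0,\omega)$. Derived: $\neg\varphi=\varphi\to\bot$, $\top=\neg\bot$, $\blacksquare_I\varphi=\bot\,\mathsf{T}_I\,\varphi$, $\top\,\mathsf{S}_I\,\varphi$ (eventually before), $\widehat{\bullet}_I\varphi=\bullet_I\varphi\vee\neg\bullet_I\top$, $\Box_I\varphi=\bot\,\mathsf{R}_I\,\varphi$, $\Diamond_I\varphi=\top\,\mathsf{U}_I\,\varphi$, $\widehat{\bigcirc}_I\varphi=\bigcirc_I\varphi\vee\neg\bigcirc_I\top$. Timed HT-trace $\mathbf{M}=(\langle\mathbf{H},\mathbf{T}\rangle,\tau)$ of length $\lambda$: $H_i\subseteq T_i\subseteq\mathcal{A}$, $\tau:[0,\lambda)\to\mathbb{N}$, $\tau(0)=0$; strict: $\tau(i)<\tau(i+1)$ whenever $i+1<\lambda$. Satisfaction at $k$: $\bot$ never; $p$ iff $p\in H_k$; $\wedge,\vee$ usual; $\varphi\to\psi$ iff for both $\mathbf{M}'=\mathbf{M}$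 and $\mathbf{M}'=(\langle\mathbf{T},\mathbf{T}\rangle,\tau)$, $\mathbf{M}',k\not\models\varphi$ or $\mathbf{M}',k\models\psi$; $\bullet_I\varphi$: $k>0$, $\varphi$ at $k-1$, $\tau(k)-\tau(k-1)\in I$; $\varphi\,\mathsf{S}_I\,\psi$: some $j\in[0,k]$ with $\tau(k)-\tau(j)\in I$, $\psi$ at $j$, $\varphi$ at all $i\in(j,k]$; $\varphi\,\mathsf{T}_I\,\psi$: for all such $j$, $\psi$ at $j$ or $\varphi$ at some $i\in(j,k]$; $\bigcirc_I\varphi$: $k+1<\lambda$, $\varphi$ at $k+1$, $\tau(k+1)-\tau(k)\in I$; $\varphi\,\mathsf{U}_I\,\psi$: some $j\in[k,\lambda)$ with $\tau(j)-\tau(k)\in I$, $\psi$ at $j$, $\varphi$ at all $i\in[k,j)$; $\varphi\,\mathsf{R}_I\,\psi$: for all such $j$, $\psi$ at $j$ or $\varphi$ at some $i\in[k,j)$. $\equiv$ means $\mathbf{M},k\models\varphi\leftrightarrow\psi$ for all strict timed HT-traces $\mathbf{M}$ and all $k$. *)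

(* Defs.v *)
From Stdlib Require Import Arith Lia.

Set Implicit Arguments.

Record interval := Itv {
  lo : nat;
  lo_closed : bool;  (* true: [m,  false: (m *)
  hi : option nat;   (* upper bound n; None = omega *)
  hi_closed : bool   (* true: n],  false: n) ; ignored when hi = None *)
}.

Definition in_itv (I : interval) (d : nat) : Prop :=
  (if lo_closed I then lo I <= d else lo I < d) /\
  match hi I with
  | None => True
  | Some n => if hi_closed I then d <= n else d < n
  end.

Definition itv_co (m n : nat) := Itv m true (Some n) false.
Definition itv_cc (m n : nat) := Itv m true (Some n) true.
Definition itv_oo (m n : nat) := Itv m false (Some n) false.
Definition itv_oc (m n : nat) := Itv m false (Some n) true.
Definition itv_all := Itv 0 true None false.

Inductive formula (A : Type) :=
| Atom : A -> formula A
| Bot : formula A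
| Impl : formula A -> formula A -> formula A
| And : formula A -> formula A -> formula A
| Or : formula A -> formula A -> formula A
| Prev : interval -> formula A -> formula A
| Since : interval -> formula A -> formula A -> formula A
| Trigger : interval -> formula A -> formula A -> formula A
| Next : interval -> formula A -> formula A
| Until : interval -> formula A -> formula A -> formula A
| Release : interval -> formula A -> formula A -> formula A.

Arguments Bot {A}.

Definition Neg {A} (f : formula A) := Impl f Bot.
Definition Top {A} : formula A := Neg Bot.
Definition Iff {A} (f g : formula A) := And (Impl f g) (Impl g f).
Definition AlwaysBefore {A} I (f : formula A) := Trigger I Bot f.
Definition EventuallyBefore {A} I (f : formula A) := Since I Top f.
Definition WPrev {A} I (f : formula A) := Or (Prev I f) (Neg (Prev I Top)).
Definition Always {A} I (f : formula A) := Release I Bot f.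
Definition Eventually {A} I (f : formula A) := Until I Top f.
Definition WNext {A} I (f : formula A) := Or (Next I f) (Neg (Next I Top)).

(* Timed HT-traces; length None = omega. *)
Record trace (A : Type) := Trace {
  len : option nat;
  Hs : nat -> A -> Prop;
  Ts : nat -> A -> Prop;
  tau : nat -> nat
}.

Definition in_len {A} (M : trace A) (i : nat) : Prop :=
  match len M with None => True | Some l => i < l end.

Definition strict_trace {A} (M : trace A) : Prop :=
  (forall i, in_len M i -> forall p, Hs M i p -> Ts M i p) /\
  tau M 0 = 0 /\
  (forall i, in_len M (S i) -> tau M i < tau M (S i)).

(* Satisfaction; here = true evaluates atoms in H (the trace <H,T>),
   here = false evaluates atoms in T (the trace <T,T>). *)
Fixpoint sat {A} (here : bool) (M : trace A) (k : nat) (f : formula A) : Prop :=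
  match f with
  | Atom p => if here then Hs M k p else Ts M k p
  | Bot => False
  | Impl f g =>
      (~ sat here M k f \/ sat here M k g) /\
      (~ sat false M k f \/ sat false M k g)
  | And f g => sat here M k f /\ sat here M k g
  | Or f g => sat here M k f \/ sat here M k g
  | Prev J f => 0 < k /\ sat here M (k - 1) f /\ in_itv J (tau M k - tau M (k - 1))
  | Since J f g => exists j, j <= k /\ in_itv J (tau M k - tau M j) /\
       sat here M j g /\ (forall i, j < i <= k -> sat here M i f)
  | Trigger J f g => forall j, j <= k -> in_itv J (tau M k - tau M j) ->
       sat here M j g \/ (exists i, j < i <= k /\ sat here M i f)
  | Next J f => in_len M (S k) /\ sat here M (S k) f /\ in_itv J (tau M (S k) - tau M k)
  | Until J f g => exists j, k <= j /\ in_len M j /\ in_itv J (tau M j - tau M k) /\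
       sat here M j g /\ (forall i, k <= i < j -> sat here M i f)
  | Release J f g => forall j, k <= j -> in_len M j -> in_itv J (tau M j - tau M k) ->
       sat here M j g \/ (exists i, k <= i < j /\ sat here M i f)
  end.

Definition mht_equiv {A} (f g : formula A) : Prop :=
  forall M : trace A, strict_trace M -> forall k, in_len M k -> sat true M k (Iff f g).

(* Main.v *)
Require Import Defs.
From Stdlib Require Import Arith Lia Classical.

Lemma min_ex (S : nat -> Prop) a : S a -> exists x, S x /\ forall y, S y -> x <= y.
Proof.
  revert a. intro a. induction a as [a IH] using (well_founded_induction lt_wf).
  intro Ha. destruct (classic (exists y, y < a /\ S y)) as [[y [Hy Sy]]|Hn].
  - exact (IH y Hy Sy).
  - exists a; split; auto. intros y Sy. destruct (le_gt_dec a y); auto.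
    exfalso; apply Hn; eauto.
Qed.

Lemma len_down {A} (M : trace A) i j : in_len M j -> i <= j -> in_len M i.
Proof. unfold in_len; destruct (len M); auto; lia. Qed.

Lemma tau_lt {A} (M : trace A) : strict_trace M ->
  forall j, in_len M j -> forall i, i < j -> tau M i < tau M j.
Proof.
  intros [_ [_ H]] j. induction j; intros Hj i Hi; [lia|].
  assert (Hj' : in_len M j) by (apply (len_down M j (S j)); auto).
  specialize (H j Hj).
  destruct (Nat.eq_dec i j); [subst; auto|].
  specialize (IHj Hj' i ltac:(lia)); lia.
Qed.

Lemma tau_le {A} (M : trace A) : strict_trace M ->
  forall j, in_len M j -> forall i, i <= j -> tau M i <= tau M j.
Proof.
  intros HM j Hj i Hi. destruct (Nat.eq_dec i j); [subst; lia|].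
  pose proof (tau_lt M HM j Hj i ltac:(lia)); lia.
Qed.

Section Defs2.
Context {A : Type} (M : trace A).

Definition Unt (I : nat -> Prop) (P Q : nat -> Prop) k :=
  exists j, k <= j /\ in_len M j /\ I (tau M j - tau M k) /\ Q j /\
    forall i, k <= i < j -> P i.
Definition Rel (I : nat -> Prop) (P Q : nat -> Prop) k :=
  forall j, k <= j -> in_len M j -> I (tau M j - tau M k) ->
    Q j \/ exists i, k <= i < j /\ P i.
Definition Ev (I : nat -> Prop) (Q : nat -> Prop) k :=
  exists j, k <= j /\ in_len M j /\ I (tau M j - tau M k) /\ Q j.
Definition Alw (I : nat -> Prop) (Q : nat -> Prop) k :=
  forall j, k <= j -> in_len M j -> I (tau M j - tau M k) -> Q j.

Definition Sin (I : nat -> Prop) (P Q : nat -> Prop) k :=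
  exists j, j <= k /\ I (tau M k - tau M j) /\ Q j /\
    forall i, j < i <= k -> P i.
Definition Trg (I : nat -> Prop) (P Q : nat -> Prop) k :=
  forall j, j <= k -> I (tau M k - tau M j) ->
    Q j \/ exists i, j < i <= k /\ P i.
Definition Evb (I : nat -> Prop) (Q : nat -> Prop) k :=
  exists j, j <= k /\ I (tau M k - tau M j) /\ Q j.
Definition Alwb (I : nat -> Prop) (Q : nat -> Prop) k :=
  forall j, j <= k -> I (tau M k - tau M j) -> Q j.
End Defs2.

Lemma fut_gen {A} (M : trace A) (HM : strict_trace M) (I B : nat -> Prop)
  (HIB : forall d, I d -> ~ B d) (Hconv : forall d d', ~ B d -> d <= d' -> I d' -> I d)
  (HB0 : B 0) (HBd : forall d d', d <= d' -> B d' -> B d) (P Q : nat -> Prop) k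
  (Hk : in_len M k) :
  Unt M I P Q k <->
  Ev M I Q k /\ Alw M B (Unt M (fun _ => True) P (fun l => P l /\ in_len M (S l) /\ Q (S l))) k.
Proof.
  unfold Unt, Ev, Alw. split.
  - intros [j [Hkj [Lj [Ij [Qj Pj]]]]]. split; [eauto 10|].
    intros j' Hkj' Lj' Bj'.
    assert (j' < j). { destruct (le_lt_dec j j') as [h|h]; auto. exfalso.
      apply (HIB _ Ij). apply (HBd _ (tau M j' - tau M k)); auto.
      pose proof (tau_le M HM j' Lj' j h). lia. }
    destruct j as [|l]; [lia|]. exists l. repeat split; try lia; auto.
    + apply (len_down M l (S l)); auto.
    + apply Pj; lia.
    + intros; apply Pj; lia.
  - intros [[j0 [Hkj0 [Lj0 [Ij0 Qj0]]]] Hbox].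
    destruct (min_ex (fun j => k <= j /\ in_len M j /\ ~ B (tau M j - tau M k)) j0)
      as [j1 [[Hkj1 [Lj1 NBj1]] Hmin]]. { repeat split; auto. }
    destruct (Nat.eq_dec j1 k). { subst. rewrite Nat.sub_diag in NBj1. contradiction. }
    destruct j1 as [|j']; [lia|].
    assert (Lj' : in_len M j') by (apply (len_down M j' (S j')); auto).
    assert (Bj' : B (tau M j' - tau M k)). { apply NNPP; intro NB.
      assert (k <= j') by lia. specialize (Hmin j' (conj H (conj Lj' NB))). lia. }
    assert (Pk : forall i, k <= i <= j' -> P i).
    { intros i Hi. assert (Li : in_len M i) by (apply (len_down M i j'); [auto|lia]).
      destruct (Hbox i ltac:(lia) Li) as [l [Hil [Ll [_ [[Pl _] Pil]]]]].
      { apply (HBd _ (tau M j' - tau M k)); auto.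
        pose proof (tau_le M HM j' Lj' i ltac:(lia)). lia. }
      destruct (Nat.eq_dec i l); [subst; auto|]. apply Pil; lia. }
    destruct (Hbox j' ltac:(lia) Lj' Bj') as [l [Hjl [Ll [_ [[Pl [LSl QSl]] Pjl]]]]].
    assert (Pall : forall i, k <= i <= l -> P i).
    { intros i Hi. destruct (le_lt_dec i j'); [apply Pk; lia|].
      destruct (Nat.eq_dec i l); [subst; auto|]. apply Pjl; lia. }
    destruct (le_lt_dec (S l) j0).
    + exists (S l). split; [lia|]. split; auto. split.
      * apply (Hconv _ (tau M j0 - tau M k)).
        -- intro BS. apply NBj1. apply (HBd _ (tau M (S l) - tau M k)); auto.
           pose proof (tau_le M HM (S l) LSl (S j') ltac:(lia)). lia.
        -- pose proof (tau_le M HM j0 Lj0 (S l) ltac:(lia)). lia.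
        -- auto.
      * split; auto. intros i Hi. apply Pall; lia.
    + exists j0. repeat split; auto. intros i Hi. apply Pall; lia.
Qed.

Lemma fut_zc {A} (M : trace A) (HM : strict_trace M) (I : nat -> Prop)
  (Hconv : forall d d', d <= d' -> I d' -> I d) (P Q : nat -> Prop) k (Hk : in_len M k) :
  Unt M I P Q k <-> Ev M I Q k /\ Unt M (fun _ => True) P Q k.
Proof.
  unfold Unt, Ev. split.
  - intros [j [Hkj [Lj [Ij [Qj Pj]]]]]. split; eauto 10.
  - intros [[j0 [Hkj0 [Lj0 [Ij0 Qj0]]]] [j1 [Hkj1 [Lj1 [_ [Qj1 Pj1]]]]]].
    destruct (le_lt_dec j1 j0).
    + exists j1. repeat split; auto. apply (Hconv _ (tau M j0 - tau M k)); auto.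
      pose proof (tau_le M HM j0 Lj0 j1 ltac:(lia)). lia.
    + exists j0. repeat split; auto. intros; apply Pj1; lia.
Qed.

Lemma Alw_zero {A} (M : trace A) (HM : strict_trace M) X k (Hk : in_len M k) :
  Alw M (fun d => d <= 0) X k <-> X k.
Proof.
  unfold Alw. split.
  - intros H. apply H; auto; lia.
  - intros H j Hkj Lj Hd. destruct (Nat.eq_dec j k); [subst; auto|].
    pose proof (tau_lt M HM j Lj k ltac:(lia)). lia.
Qed.

Lemma fut_zo {A} (M : trace A) (HM : strict_trace M) (I : nat -> Prop)
  (HI : forall d, I d -> 0 < d) (Hconv : forall d d', 0 < d -> d <= d' -> I d' -> I d)
  (P Q : nat -> Prop) k (Hk : in_len M k) :
  Unt M I P Q k <->
  Ev M I Q k /\ Unt M (fun _ => True) P (fun l => P l /\ in_len M (S l) /\ Q (S l)) k.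
Proof.
  rewrite (fut_gen M HM I (fun d => d <= 0)); auto.
  - rewrite Alw_zero; auto. tauto.
  - intros d Hd; specialize (HI d Hd); lia.
  - intros d d' Hd; apply Hconv; lia.
  - intros; lia.
Qed.

Lemma past_gen {A} (M : trace A) (HM : strict_trace M) (I B : nat -> Prop)
  (HIB : forall d, I d -> ~ B d) (Hconv : forall d d', ~ B d -> d <= d' -> I d' -> I d)
  (HB0 : B 0) (HBd : forall d d', d <= d' -> B d' -> B d) (P Q : nat -> Prop) k
  (Hk : in_len M k) :
  Sin M I P Q k <->
  Evb M I Q k /\ Alwb M B (Sin M (fun _ => True) P (fun l => P l /\ 0 < l /\ Q (l - 1))) k.
Proof.
  unfold Sin, Evb, Alwb.
  assert (Tle : forall i j, i <= j -> j <= k -> tau M i <= tau M j).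
  { intros i j Hij Hjk. apply (tau_le M HM j); auto. apply (len_down M j k); auto. }
  split.
  - intros [j [Hjk [Ij [Qj Pj]]]]. split; [eauto 10|].
    intros j' Hj'k Bj'.
    assert (j < j'). { destruct (le_lt_dec j' j) as [h|h]; auto. exfalso.
      apply (HIB _ Ij). apply (HBd _ (tau M k - tau M j')); auto.
      pose proof (Tle j' j h Hjk). lia. }
    exists (S j). repeat split; try lia; auto.
    + apply Pj; lia.
    + replace (S j - 1) with j by lia. auto.
    + intros; apply Pj; lia.
  - intros [[j0 [Hj0k [Ij0 Qj0]]] Hbox].
    destruct (min_ex (fun j => j <= k /\ B (tau M k - tau M j)) k)
      as [j1 [[Hj1k Bj1] Hmin]]. { split; auto. rewrite Nat.sub_diag; auto. }
    assert (j0 < j1). { destruct (le_lt_dec j1 j0) as [h|h]; auto. exfalso.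
      apply (HIB _ Ij0). apply (HBd _ (tau M k - tau M j1)); auto.
      pose proof (Tle j1 j0 h Hj0k). lia. }
    destruct j1 as [|j'']; [lia|].
    assert (NBj'' : ~ B (tau M k - tau M j'')).
    { intro Bj. assert (j'' <= k) by lia. specialize (Hmin j'' (conj H0 Bj)). lia. }
    assert (Pk : forall i, S j'' <= i <= k -> P i).
    { intros i Hi.
      destruct (Hbox i ltac:(lia)) as [l [Hli [_ [[Pl _] Pil]]]].
      { apply (HBd _ (tau M k - tau M (S j''))); auto.
        pose proof (Tle (S j'') i ltac:(lia) ltac:(lia)). lia. }
      destruct (Nat.eq_dec i l); [subst; auto|]. apply Pil; lia. }
    destruct (Hbox (S j'') Hj1k Bj1) as [l [Hlj [_ [[Pl [Hl0 Ql]] Plj]]]].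
    assert (Pall : forall i, l <= i <= k -> P i).
    { intros i Hi. destruct (le_lt_dec (S j'') i); [apply Pk; lia|].
      destruct (Nat.eq_dec i l); [subst; auto|]. apply Plj; lia. }
    destruct (le_lt_dec j0 (l - 1)).
    + exists (l - 1). split; [lia|]. split.
      * apply (Hconv _ (tau M k - tau M j0)).
        -- intro BS. apply NBj''. apply (HBd _ (tau M k - tau M (l - 1))); auto.
           pose proof (Tle (l - 1) j'' ltac:(lia) ltac:(lia)). lia.
        -- pose proof (Tle j0 (l - 1) ltac:(lia) ltac:(lia)). lia.
        -- auto.
      * split; auto. intros i Hi. apply Pall; lia.
    + exists j0. repeat split; auto. intros i Hi. apply Pall; lia.
Qed.

Lemma past_zc {A} (M : trace A) (HM : strict_trace M) (I : nat -> Prop)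
  (Hconv : forall d d', d <= d' -> I d' -> I d) (P Q : nat -> Prop) k (Hk : in_len M k) :
  Sin M I P Q k <-> Evb M I Q k /\ Sin M (fun _ => True) P Q k.
Proof.
  unfold Sin, Evb.
  assert (Tle : forall i j, i <= j -> j <= k -> tau M i <= tau M j).
  { intros i j Hij Hjk. apply (tau_le M HM j); auto. apply (len_down M j k); auto. }
  split.
  - intros [j [Hjk [Ij [Qj Pj]]]]. split; eauto 10.
  - intros [[j0 [Hj0k [Ij0 Qj0]]] [j1 [Hj1k [_ [Qj1 Pj1]]]]].
    destruct (le_lt_dec j0 j1).
    + exists j1. repeat split; auto. apply (Hconv _ (tau M k - tau M j0)); auto.
      pose proof (Tle j0 j1 ltac:(lia) Hj1k). lia.
    + exists j0. repeat split; auto. intros; apply Pj1; lia.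
Qed.

Lemma Alwb_zero {A} (M : trace A) (HM : strict_trace M) X k (Hk : in_len M k) :
  Alwb M (fun d => d <= 0) X k <-> X k.
Proof.
  unfold Alwb. split.
  - intros H. apply H; auto; lia.
  - intros H j Hjk Hd. destruct (Nat.eq_dec j k); [subst; auto|].
    pose proof (tau_lt M HM k Hk j ltac:(lia)). lia.
Qed.

Lemma past_zo {A} (M : trace A) (HM : strict_trace M) (I : nat -> Prop)
  (HI : forall d, I d -> 0 < d) (Hconv : forall d d', 0 < d -> d <= d' -> I d' -> I d)
  (P Q : nat -> Prop) k (Hk : in_len M k) :
  Sin M I P Q k <->
  Evb M I Q k /\ Sin M (fun _ => True) P (fun l => P l /\ 0 < l /\ Q (l - 1)) k.
Proof.
  rewrite (past_gen M HM I (fun d => d <= 0)); auto.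
  - rewrite Alwb_zero; auto. tauto.
  - intros d Hd; specialize (HI d Hd); lia.
  - intros d d' Hd; apply Hconv; lia.
  - intros; lia.
Qed.

Section Ext.
Context {A : Type} (M : trace A).
Lemma Alw_ext I X Y k : (forall j, X j <-> Y j) -> (Alw M I X k <-> Alw M I Y k).
Proof. unfold Alw; intro H; split; intros H' j a b c; apply H; auto. Qed.
Lemma Ev_ext I X Y k : (forall j, X j <-> Y j) -> (Ev M I X k <-> Ev M I Y k).
Proof. unfold Ev; intro H; split; intros [j Hj]; exists j; rewrite ?H in *; firstorder. Qed.
Lemma Alwb_ext I X Y k : (forall j, X j <-> Y j) -> (Alwb M I X k <-> Alwb M I Y k).
Proof. unfold Alwb; intro H; split; intros H' j a b; apply H; auto. Qed.
Lemma Evb_ext I X Y k : (forall j, X j <-> Y j) -> (Evb M I X k <-> Evb M I Y k).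
Proof. unfold Evb; intro H; split; intros [j Hj]; exists j; firstorder. Qed.
Lemma Unt_ext I P Q Q' k : (forall j, Q j <-> Q' j) -> (Unt M I P Q k <-> Unt M I P Q' k).
Proof. unfold Unt; intro H; split; intros [j Hj]; exists j; firstorder. Qed.
Lemma Sin_ext I P Q Q' k : (forall j, Q j <-> Q' j) -> (Sin M I P Q k <-> Sin M I P Q' k).
Proof. unfold Sin; intro H; split; intros [j Hj]; exists j; firstorder. Qed.
Lemma Rel_ext I P Q Q' k : (forall j, Q j <-> Q' j) -> (Rel M I P Q k <-> Rel M I P Q' k).
Proof. unfold Rel; intro H; split; intros H' j a b c; rewrite <- ?H; firstorder. Qed.
Lemma Trg_ext I P Q Q' k : (forall j, Q j <-> Q' j) -> (Trg M I P Q k <-> Trg M I P Q' k).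
Proof. unfold Trg; intro H; split; intros H' j a b; firstorder. Qed.

Lemma rel_not I P Q k : Rel M I P Q k <-> ~ Unt M I (fun i => ~ P i) (fun i => ~ Q i) k.
Proof.
  unfold Rel, Unt. split.
  - intros H [j [a [b [c [d e]]]]]. destruct (H j a b c) as [Hq|[i [Hi Hp]]]; auto.
    apply (e i Hi Hp).
  - intros H j a b c. destruct (classic (Q j)); auto. right.
    apply NNPP; intro Hn. apply H. exists j; repeat split; auto.
    intros i Hi Hp. apply Hn; eauto.
Qed.
Lemma trg_not I P Q k : Trg M I P Q k <-> ~ Sin M I (fun i => ~ P i) (fun i => ~ Q i) k.
Proof.
  unfold Trg, Sin. split.
  - intros H [j [a [c [d e]]]]. destruct (H j a c) as [Hq|[i [Hi Hp]]]; auto.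
    apply (e i Hi Hp).
  - intros H j a c. destruct (classic (Q j)); auto. right.
    apply NNPP; intro Hn. apply H. exists j; repeat split; auto.
    intros i Hi Hp. apply Hn; eauto.
Qed.
Lemma alw_not I Q k : Alw M I Q k <-> ~ Ev M I (fun i => ~ Q i) k.
Proof.
  unfold Alw, Ev. split.
  - intros H [j [a [b [c d]]]]. apply d; auto.
  - intros H j a b c. apply NNPP; intro Hn. apply H; eauto 10.
Qed.
Lemma ev_not I X k : Ev M I X k <-> ~ Alw M I (fun i => ~ X i) k.
Proof.
  unfold Alw, Ev. split.
  - intros [j [a [b [c d]]]] H. apply (H j); auto.
  - intros H. apply NNPP; intro Hn. apply H. intros j a b c d. apply Hn; eauto 10.
Qed.
Lemma alwb_not I Q k : Alwb M I Q k <-> ~ Evb M I (fun i => ~ Q i) k.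
Proof.
  unfold Alwb, Evb. split.
  - intros H [j [a [c d]]]. apply d; auto.
  - intros H j a c. apply NNPP; intro Hn. apply H; eauto 10.
Qed.
Lemma evb_not I X k : Evb M I X k <-> ~ Alwb M I (fun i => ~ X i) k.
Proof.
  unfold Alwb, Evb. split.
  - intros [j [a [c d]]] H. apply (H j); auto.
  - intros H. apply NNPP; intro Hn. apply H. intros j a c d. apply Hn; eauto 10.
Qed.
End Ext.

Lemma inner_rel {A} (M : trace A) P Q j :
  ~ Rel M (fun _ => True) P (fun l => P l \/ (in_len M (S l) -> Q (S l))) j <->
  Unt M (fun _ => True) (fun i => ~ P i) (fun l => ~ P l /\ in_len M (S l) /\ ~ Q (S l)) j.
Proof.
  rewrite rel_not.
  rewrite (Unt_ext M _ _ (fun l => ~ P l /\ in_len M (S l) /\ ~ Q (S l)) (fun l => ~ (P l \/ (in_len M (S l) -> Q (S l))))).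
  - split; [apply NNPP| tauto].
  - intro l. destruct (classic (in_len M (S l))); destruct (classic (Q (S l))); tauto.
Qed.

Lemma inner_trg {A} (M : trace A) P Q j :
  ~ Trg M (fun _ => True) P (fun l => P l \/ (0 < l -> Q (l - 1))) j <->
  Sin M (fun _ => True) (fun i => ~ P i) (fun l => ~ P l /\ 0 < l /\ ~ Q (l - 1)) j.
Proof.
  rewrite trg_not.
  rewrite (Sin_ext M _ _ (fun l => ~ P l /\ 0 < l /\ ~ Q (l - 1)) (fun l => ~ (P l \/ (0 < l -> Q (l - 1))))).
  - split; [apply NNPP| tauto].
  - intro l. destruct (classic (0 < l)); destruct (classic (Q (l - 1))); tauto.
Qed.

Lemma rel_gen {A} (M : trace A) (HM : strict_trace M) (I B : nat -> Prop)
  (HIB : forall d, I d -> ~ B d) (Hconv : forall d d', ~ B d -> d <= d' -> I d' -> I d)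
  (HB0 : B 0) (HBd : forall d d', d <= d' -> B d' -> B d) (P Q : nat -> Prop) k
  (Hk : in_len M k) :
  Rel M I P Q k <->
  Alw M I Q k \/ Ev M B (Rel M (fun _ => True) P (fun l => P l \/ (in_len M (S l) -> Q (S l)))) k.
Proof.
  rewrite (rel_not M I P Q k), (alw_not M I Q k), (ev_not M B _ k).
  rewrite (fut_gen M HM I B HIB Hconv HB0 HBd (fun i => ~ P i) (fun i => ~ Q i) k Hk).
  rewrite (Alw_ext M _ (Unt M (fun _ => True) (fun i => ~ P i) (fun l => ~ P l /\ in_len M (S l) /\ ~ Q (S l))) (fun i => ~ Rel M (fun _ => True) P (fun l => P l \/ (in_len M (S l) -> Q (S l))) i)).
  - destruct (classic (Ev M I (fun i => ~ Q i) k)); tauto.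
  - intro j. rewrite inner_rel. reflexivity.
Qed.

Lemma rel_zc {A} (M : trace A) (HM : strict_trace M) (I : nat -> Prop)
  (Hconv : forall d d', d <= d' -> I d' -> I d) (P Q : nat -> Prop) k (Hk : in_len M k) :
  Rel M I P Q k <-> Alw M I Q k \/ Rel M (fun _ => True) P Q k.
Proof.
  rewrite (rel_not M I P Q k), (rel_not M _ P Q k), (alw_not M I Q k).
  rewrite (fut_zc M HM I Hconv (fun i => ~ P i) (fun i => ~ Q i) k Hk).
  destruct (classic (Ev M I (fun i => ~ Q i) k)); tauto.
Qed.

Lemma rel_zo {A} (M : trace A) (HM : strict_trace M) (I : nat -> Prop)
  (HI : forall d, I d -> 0 < d) (Hconv : forall d d', 0 < d -> d <= d' -> I d' -> I d)
  (P Q : nat -> Prop) k (Hk : in_len M k) :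
  Rel M I P Q k <->
  Alw M I Q k \/ Rel M (fun _ => True) P (fun l => P l \/ (in_len M (S l) -> Q (S l))) k.
Proof.
  rewrite (rel_not M I P Q k), (alw_not M I Q k).
  rewrite (fut_zo M HM I HI Hconv (fun i => ~ P i) (fun i => ~ Q i) k Hk).
  rewrite <- inner_rel.
  destruct (classic (Ev M I (fun i => ~ Q i) k)); tauto.
Qed.

Lemma trg_gen {A} (M : trace A) (HM : strict_trace M) (I B : nat -> Prop)
  (HIB : forall d, I d -> ~ B d) (Hconv : forall d d', ~ B d -> d <= d' -> I d' -> I d)
  (HB0 : B 0) (HBd : forall d d', d <= d' -> B d' -> B d) (P Q : nat -> Prop) k
  (Hk : in_len M k) :
  Trg M I P Q k <->
  Alwb M I Q k \/ Evb M B (Trg M (fun _ => True) P (fun l => P l \/ (0 < l -> Q (l - 1)))) k.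
Proof.
  rewrite (trg_not M I P Q k), (alwb_not M I Q k), (evb_not M B _ k).
  rewrite (past_gen M HM I B HIB Hconv HB0 HBd (fun i => ~ P i) (fun i => ~ Q i) k Hk).
  rewrite (Alwb_ext M _ (Sin M (fun _ => True) (fun i => ~ P i) (fun l => ~ P l /\ 0 < l /\ ~ Q (l - 1))) (fun i => ~ Trg M (fun _ => True) P (fun l => P l \/ (0 < l -> Q (l - 1))) i)).
  - destruct (classic (Evb M I (fun i => ~ Q i) k)); tauto.
  - intro j. rewrite inner_trg. reflexivity.
Qed.

Lemma trg_zc {A} (M : trace A) (HM : strict_trace M) (I : nat -> Prop)
  (Hconv : forall d d', d <= d' -> I d' -> I d) (P Q : nat -> Prop) k (Hk : in_len M k) :
  Trg M I P Q k <-> Alwb M I Q k \/ Trg M (fun _ => True) P Q k.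
Proof.
  rewrite (trg_not M I P Q k), (trg_not M _ P Q k), (alwb_not M I Q k).
  rewrite (past_zc M HM I Hconv (fun i => ~ P i) (fun i => ~ Q i) k Hk).
  destruct (classic (Evb M I (fun i => ~ Q i) k)); tauto.
Qed.

Lemma trg_zo {A} (M : trace A) (HM : strict_trace M) (I : nat -> Prop)
  (HI : forall d, I d -> 0 < d) (Hconv : forall d d', 0 < d -> d <= d' -> I d' -> I d)
  (P Q : nat -> Prop) k (Hk : in_len M k) :
  Trg M I P Q k <->
  Alwb M I Q k \/ Trg M (fun _ => True) P (fun l => P l \/ (0 < l -> Q (l - 1))) k.
Proof.
  rewrite (trg_not M I P Q k), (alwb_not M I Q k).
  rewrite (past_zo M HM I HI Hconv (fun i => ~ P i) (fun i => ~ Q i) k Hk).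
  rewrite <- inner_trg.
  destruct (classic (Evb M I (fun i => ~ Q i) k)); tauto.
Qed.

Section S.
Context {A : Type} (b : bool) (M : trace A).

Lemma iff_sat k (f g : formula A) :
  (forall b, sat b M k f <-> sat b M k g) -> sat true M k (Iff f g).
Proof.
  intro H. change (((~ sat true M k f \/ sat true M k g) /\ (~ sat false M k f \/ sat false M k g)) /\
    ((~ sat true M k g \/ sat true M k f) /\ (~ sat false M k g \/ sat false M k f))).
  pose proof (H true); pose proof (H false).
  destruct (classic (sat true M k f)); destruct (classic (sat false M k f)); tauto.
Qed.

Lemma all_true d : in_itv itv_all d <-> True.
Proof. unfold in_itv; simpl; split; auto; lia. Qed.

Lemma top_true k : sat b M k Top <-> True.
Proof. simpl; tauto. Qed.

Lemma sat_unt k I f g : sat b M k (Until I f g) <-> Unt M (in_itv I) (fun i => sat b M i f) (fun i => sat b M i g) k.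
Proof. reflexivity. Qed.
Lemma sat_rel k I f g : sat b M k (Release I f g) <-> Rel M (in_itv I) (fun i => sat b M i f) (fun i => sat b M i g) k.
Proof. reflexivity. Qed.
Lemma sat_sin k I f g : sat b M k (Since I f g) <-> Sin M (in_itv I) (fun i => sat b M i f) (fun i => sat b M i g) k.
Proof. reflexivity. Qed.
Lemma sat_trg k I f g : sat b M k (Trigger I f g) <-> Trg M (in_itv I) (fun i => sat b M i f) (fun i => sat b M i g) k.
Proof. reflexivity. Qed.

Lemma sat_ev k I g : sat b M k (Eventually I g) <-> Ev M (in_itv I) (fun i => sat b M i g) k.
Proof. unfold Ev; simpl; firstorder. Qed.
Lemma sat_alw k I g : sat b M k (Always I g) <-> Alw M (in_itv I) (fun i => sat b M i g) k.
Proof. unfold Alw; simpl; split; intros H j a c d; [destruct (H j a c d) as [?|[? [? []]]]|]; auto. Qed.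
Lemma sat_evb k I g : sat b M k (EventuallyBefore I g) <-> Evb M (in_itv I) (fun i => sat b M i g) k.
Proof. unfold Evb; simpl; firstorder. Qed.
Lemma sat_alwb k I g : sat b M k (AlwaysBefore I g) <-> Alwb M (in_itv I) (fun i => sat b M i g) k.
Proof. unfold Alwb; simpl; split; intros H j a c; [destruct (H j a c) as [?|[? [? []]]]|]; auto. Qed.

Lemma sat_unt_all k f g : sat b M k (Until itv_all f g) <-> Unt M (fun _ => True) (fun i => sat b M i f) (fun i => sat b M i g) k.
Proof. rewrite sat_unt. unfold Unt. split; intros [j H]; exists j; rewrite ?all_true in *; tauto. Qed.
Lemma sat_sin_all k f g : sat b M k (Since itv_all f g) <-> Sin M (fun _ => True) (fun i => sat b M i f) (fun i => sat b M i g) k.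
Proof. rewrite sat_sin. unfold Sin. split; intros [j H]; exists j; rewrite ?all_true in *; tauto. Qed.
Lemma sat_rel_all k f g : sat b M k (Release itv_all f g) <-> Rel M (fun _ => True) (fun i => sat b M i f) (fun i => sat b M i g) k.
Proof. rewrite sat_rel. unfold Rel. split; intros H j a c d; apply H; auto; apply all_true; auto. Qed.
Lemma sat_trg_all k f g : sat b M k (Trigger itv_all f g) <-> Trg M (fun _ => True) (fun i => sat b M i f) (fun i => sat b M i g) k.
Proof. rewrite sat_trg. unfold Trg. split; intros H j a c; apply H; auto; apply all_true; auto. Qed.

Lemma sat_andnext l f g : sat b M l (And f (Next itv_all g)) <-> sat b M l f /\ in_len M (S l) /\ sat b M (S l) g.
Proof. simpl. rewrite all_true. tauto. Qed.
Lemma sat_andprev l f g : sat b M l (And f (Prev itv_all g)) <-> sat b M l f /\ 0 < l /\ sat b M (l - 1) g.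
Proof. simpl. rewrite all_true. tauto. Qed.
Lemma sat_wn l f g : sat b M l (Or f (WNext itv_all g)) <-> sat b M l f \/ (in_len M (S l) -> sat b M (S l) g).
Proof. simpl. rewrite !all_true. destruct (classic (in_len M (S l))); tauto. Qed.
Lemma sat_wp l f g : sat b M l (Or f (WPrev itv_all g)) <-> sat b M l f \/ (0 < l -> sat b M (l - 1) g).
Proof. simpl. rewrite !all_true. destruct (classic (0 < l)); tauto. Qed.

Lemma shapeU k I J phi psi :
  sat b M k (And (Eventually I psi) (Always J (Until itv_all phi (And phi (Next itv_all psi))))) <->
  Ev M (in_itv I) (fun i => sat b M i psi) k /\
  Alw M (in_itv J) (Unt M (fun _ => True) (fun i => sat b M i phi)
     (fun l => sat b M l phi /\ in_len M (S l) /\ sat b M (S l) psi)) k.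
Proof.
  change (sat b M k (And ?X ?Y)) with (sat b M k X /\ sat b M k Y).
  rewrite sat_ev, sat_alw. apply and_iff_compat_l. apply Alw_ext. intro j.
  rewrite sat_unt_all. apply Unt_ext. intro; apply sat_andnext.
Qed.
Lemma shapeUzc k I phi psi :
  sat b M k (And (Eventually I psi) (Until itv_all phi psi)) <->
  Ev M (in_itv I) (fun i => sat b M i psi) k /\ Unt M (fun _ => True) (fun i => sat b M i phi) (fun i => sat b M i psi) k.
Proof.
  change (sat b M k (And ?X ?Y)) with (sat b M k X /\ sat b M k Y).
  rewrite sat_ev, sat_unt_all. tauto.
Qed.
Lemma shapeUzo k I phi psi :
  sat b M k (And (Eventually I psi) (Until itv_all phi (And phi (Next itv_all psi)))) <->
  Ev M (in_itv I) (fun i => sat b M i psi) k /\ Unt M (fun _ => True) (fun i => sat b M i phi)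
     (fun l => sat b M l phi /\ in_len M (S l) /\ sat b M (S l) psi) k.
Proof.
  change (sat b M k (And ?X ?Y)) with (sat b M k X /\ sat b M k Y).
  rewrite sat_ev, sat_unt_all. apply and_iff_compat_l. apply Unt_ext. intro; apply sat_andnext.
Qed.

Lemma shapeR k I J phi psi :
  sat b M k (Or (Always I psi) (Eventually J (Release itv_all phi (Or phi (WNext itv_all psi))))) <->
  Alw M (in_itv I) (fun i => sat b M i psi) k \/
  Ev M (in_itv J) (Rel M (fun _ => True) (fun i => sat b M i phi)
     (fun l => sat b M l phi \/ (in_len M (S l) -> sat b M (S l) psi))) k.
Proof.
  change (sat b M k (Or ?X ?Y)) with (sat b M k X \/ sat b M k Y).
  rewrite sat_alw, sat_ev. apply or_iff_compat_l. apply Ev_ext. intro j.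
  rewrite sat_rel_all. apply Rel_ext. intro; apply sat_wn.
Qed.
Lemma shapeRzc k I phi psi :
  sat b M k (Or (Always I psi) (Release itv_all phi psi)) <->
  Alw M (in_itv I) (fun i => sat b M i psi) k \/ Rel M (fun _ => True) (fun i => sat b M i phi) (fun i => sat b M i psi) k.
Proof.
  change (sat b M k (Or ?X ?Y)) with (sat b M k X \/ sat b M k Y).
  rewrite sat_alw, sat_rel_all. tauto.
Qed.
Lemma shapeRzo k I phi psi :
  sat b M k (Or (Always I psi) (Release itv_all phi (Or phi (WNext itv_all psi)))) <->
  Alw M (in_itv I) (fun i => sat b M i psi) k \/ Rel M (fun _ => True) (fun i => sat b M i phi)
     (fun l => sat b M l phi \/ (in_len M (S l) -> sat b M (S l) psi)) k.
Proof.
  change (sat b M k (Or ?X ?Y)) with (sat b M k X \/ sat b M k Y).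
  rewrite sat_alw, sat_rel_all. apply or_iff_compat_l. apply Rel_ext. intro; apply sat_wn.
Qed.

Lemma shapeS k I J phi psi :
  sat b M k (And (EventuallyBefore I psi) (AlwaysBefore J (Since itv_all phi (And phi (Prev itv_all psi))))) <->
  Evb M (in_itv I) (fun i => sat b M i psi) k /\
  Alwb M (in_itv J) (Sin M (fun _ => True) (fun i => sat b M i phi)
     (fun l => sat b M l phi /\ 0 < l /\ sat b M (l - 1) psi)) k.
Proof.
  change (sat b M k (And ?X ?Y)) with (sat b M k X /\ sat b M k Y).
  rewrite sat_evb, sat_alwb. apply and_iff_compat_l. apply Alwb_ext. intro j.
  rewrite sat_sin_all. apply Sin_ext. intro; apply sat_andprev.
Qed.
Lemma shapeSzc k I phi psi :
  sat b M k (And (EventuallyBefore I psi) (Since itv_all phi psi)) <->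
  Evb M (in_itv I) (fun i => sat b M i psi) k /\ Sin M (fun _ => True) (fun i => sat b M i phi) (fun i => sat b M i psi) k.
Proof.
  change (sat b M k (And ?X ?Y)) with (sat b M k X /\ sat b M k Y).
  rewrite sat_evb, sat_sin_all. tauto.
Qed.
Lemma shapeSzo k I phi psi :
  sat b M k (And (EventuallyBefore I psi) (Since itv_all phi (And phi (Prev itv_all psi)))) <->
  Evb M (in_itv I) (fun i => sat b M i psi) k /\ Sin M (fun _ => True) (fun i => sat b M i phi)
     (fun l => sat b M l phi /\ 0 < l /\ sat b M (l - 1) psi) k.
Proof.
  change (sat b M k (And ?X ?Y)) with (sat b M k X /\ sat b M k Y).
  rewrite sat_evb, sat_sin_all. apply and_iff_compat_l. apply Sin_ext. intro; apply sat_andprev.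
Qed.

Lemma shapeT k I J phi psi :
  sat b M k (Or (AlwaysBefore I psi) (EventuallyBefore J (Trigger itv_all phi (Or phi (WPrev itv_all psi))))) <->
  Alwb M (in_itv I) (fun i => sat b M i psi) k \/
  Evb M (in_itv J) (Trg M (fun _ => True) (fun i => sat b M i phi)
     (fun l => sat b M l phi \/ (0 < l -> sat b M (l - 1) psi))) k.
Proof.
  change (sat b M k (Or ?X ?Y)) with (sat b M k X \/ sat b M k Y).
  rewrite sat_alwb, sat_evb. apply or_iff_compat_l. apply Evb_ext. intro j.
  rewrite sat_trg_all. apply Trg_ext. intro; apply sat_wp.
Qed.
Lemma shapeTzc k I phi psi :
  sat b M k (Or (AlwaysBefore I psi) (Trigger itv_all phi psi)) <->
  Alwb M (in_itv I) (fun i => sat b M i psi) k \/ Trg M (fun _ => True) (fun i => sat b M i phi) (fun i => sat b M i psi) k.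
Proof.
  change (sat b M k (Or ?X ?Y)) with (sat b M k X \/ sat b M k Y).
  rewrite sat_alwb, sat_trg_all. tauto.
Qed.
Lemma shapeTzo k I phi psi :
  sat b M k (Or (AlwaysBefore I psi) (Trigger itv_all phi (Or phi (WPrev itv_all psi)))) <->
  Alwb M (in_itv I) (fun i => sat b M i psi) k \/ Trg M (fun _ => True) (fun i => sat b M i phi)
     (fun l => sat b M l phi \/ (0 < l -> sat b M (l - 1) psi)) k.
Proof.
  change (sat b M k (Or ?X ?Y)) with (sat b M k X \/ sat b M k Y).
  rewrite sat_alwb, sat_trg_all. apply or_iff_compat_l. apply Trg_ext. intro; apply sat_wp.
Qed.
End S.

Ltac itv := intros; unfold in_itv in *; simpl in *; lia.

Ltac solve_case :=
  let M := fresh "M" in let HM := fresh "HM" in let k := fresh "k" in let Hk := fresh "Hk" in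
  let b := fresh "b" in
  intros M HM k Hk; apply iff_sat; intro b;
  first [rewrite sat_unt | rewrite sat_rel | rewrite sat_sin | rewrite sat_trg];
  first [rewrite shapeU | rewrite shapeUzo | rewrite shapeUzc
        | rewrite shapeR | rewrite shapeRzo | rewrite shapeRzc
        | rewrite shapeS | rewrite shapeSzo | rewrite shapeSzc
        | rewrite shapeT | rewrite shapeTzo | rewrite shapeTzc];
  first [ solve [apply fut_gen; auto; itv] | solve [apply fut_zo; auto; itv]
        | solve [apply fut_zc; auto; itv]
        | solve [apply rel_gen; auto; itv] | solve [apply rel_zo; auto; itv]
        | solve [apply rel_zc; auto; itv]
        | solve [apply past_gen; auto; itv] | solve [apply past_zo; auto; itv]
        | solve [apply past_zc; auto; itv]
        | solve [apply trg_gen; auto; itv] | solve [apply trg_zo; auto; itv]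
        | solve [apply trg_zc; auto; itv] ].

Theorem proposition10 (A : Type) (phi psi : formula A) (m n : nat) (Hm : 0 < m) :
  (* Until, m > 0 *)
  mht_equiv (Until (itv_co m n) phi psi)
    (And (Eventually (itv_co m n) psi)
         (Always (itv_co 0 m) (Until itv_all phi (And phi (Next itv_all psi))))) /\
  mht_equiv (Until (itv_cc m n) phi psi)
    (And (Eventually (itv_cc m n) psi)
         (Always (itv_co 0 m) (Until itv_all phi (And phi (Next itv_all psi))))) /\
  mht_equiv (Until (itv_oo m n) phi psi)
    (And (Eventually (itv_oo m n) psi)
         (Always (itv_cc 0 m) (Until itv_all phi (And phi (Next itv_all psi))))) /\
  mht_equiv (Until (itv_oc m n) phi psi)
    (And (Eventually (itv_oc m n) psi)
         (Always (itv_cc 0 m) (Until itv_all phi (And phi (Next itv_all psi))))) /\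
  (* Until, lower bound 0 *)
  mht_equiv (Until (itv_co 0 n) phi psi)
    (And (Eventually (itv_co 0 n) psi) (Until itv_all phi psi)) /\
  mht_equiv (Until (itv_cc 0 n) phi psi)
    (And (Eventually (itv_cc 0 n) psi) (Until itv_all phi psi)) /\
  mht_equiv (Until (itv_oo 0 n) phi psi)
    (And (Eventually (itv_oo 0 n) psi) (Until itv_all phi (And phi (Next itv_all psi)))) /\
  mht_equiv (Until (itv_oc 0 n) phi psi)
    (And (Eventually (itv_oc 0 n) psi) (Until itv_all phi (And phi (Next itv_all psi)))) /\
  (* Release, m > 0 *)
  mht_equiv (Release (itv_co m n) phi psi)
    (Or (Always (itv_co m n) psi)
        (Eventually (itv_co 0 m) (Release itv_all phi (Or phi (WNext itv_all psi))))) /\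
  mht_equiv (Release (itv_cc m n) phi psi)
    (Or (Always (itv_cc m n) psi)
        (Eventually (itv_co 0 m) (Release itv_all phi (Or phi (WNext itv_all psi))))) /\
  mht_equiv (Release (itv_oo m n) phi psi)
    (Or (Always (itv_oo m n) psi)
        (Eventually (itv_cc 0 m) (Release itv_all phi (Or phi (WNext itv_all psi))))) /\
  mht_equiv (Release (itv_oc m n) phi psi)
    (Or (Always (itv_oc m n) psi)
        (Eventually (itv_cc 0 m) (Release itv_all phi (Or phi (WNext itv_all psi))))) /\
  (* Release, lower bound 0 *)
  mht_equiv (Release (itv_co 0 n) phi psi)
    (Or (Always (itv_co 0 n) psi) (Release itv_all phi psi)) /\
  mht_equiv (Release (itv_cc 0 n) phi psi)
    (Or (Always (itv_cc 0 n) psi) (Release itv_all phi psi)) /\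
  mht_equiv (Release (itv_oo 0 n) phi psi)
    (Or (Always (itv_oo 0 n) psi) (Release itv_all phi (Or phi (WNext itv_all psi)))) /\
  mht_equiv (Release (itv_oc 0 n) phi psi)
    (Or (Always (itv_oc 0 n) psi) (Release itv_all phi (Or phi (WNext itv_all psi)))) /\
  (* Since, m > 0 *)
  mht_equiv (Since (itv_co m n) phi psi)
    (And (EventuallyBefore (itv_co m n) psi)
         (AlwaysBefore (itv_co 0 m) (Since itv_all phi (And phi (Prev itv_all psi))))) /\
  mht_equiv (Since (itv_cc m n) phi psi)
    (And (EventuallyBefore (itv_cc m n) psi)
         (AlwaysBefore (itv_co 0 m) (Since itv_all phi (And phi (Prev itv_all psi))))) /\
  mht_equiv (Since (itv_oo m n) phi psi)
    (And (EventuallyBefore (itv_oo m n) psi)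
         (AlwaysBefore (itv_cc 0 m) (Since itv_all phi (And phi (Prev itv_all psi))))) /\
  mht_equiv (Since (itv_oc m n) phi psi)
    (And (EventuallyBefore (itv_oc m n) psi)
         (AlwaysBefore (itv_cc 0 m) (Since itv_all phi (And phi (Prev itv_all psi))))) /\
  (* Since, lower bound 0 *)
  mht_equiv (Since (itv_co 0 n) phi psi)
    (And (EventuallyBefore (itv_co 0 n) psi) (Since itv_all phi psi)) /\
  mht_equiv (Since (itv_cc 0 n) phi psi)
    (And (EventuallyBefore (itv_cc 0 n) psi) (Since itv_all phi psi)) /\
  mht_equiv (Since (itv_oo 0 n) phi psi)
    (And (EventuallyBefore (itv_oo 0 n) psi) (Since itv_all phi (And phi (Prev itv_all psi)))) /\
  mht_equiv (Since (itv_oc 0 n) phi psi)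
    (And (EventuallyBefore (itv_oc 0 n) psi) (Since itv_all phi (And phi (Prev itv_all psi)))) /\
  (* Trigger, m > 0 *)
  mht_equiv (Trigger (itv_co m n) phi psi)
    (Or (AlwaysBefore (itv_co m n) psi)
        (EventuallyBefore (itv_co 0 m) (Trigger itv_all phi (Or phi (WPrev itv_all psi))))) /\
  mht_equiv (Trigger (itv_cc m n) phi psi)
    (Or (AlwaysBefore (itv_cc m n) psi)
        (EventuallyBefore (itv_co 0 m) (Trigger itv_all phi (Or phi (WPrev itv_all psi))))) /\
  mht_equiv (Trigger (itv_oo m n) phi psi)
    (Or (AlwaysBefore (itv_oo m n) psi)
        (EventuallyBefore (itv_cc 0 m) (Trigger itv_all phi (Or phi (WPrev itv_all psi))))) /\
  mht_equiv (Trigger (itv_oc m n) phi psi)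
    (Or (AlwaysBefore (itv_oc m n) psi)
        (EventuallyBefore (itv_cc 0 m) (Trigger itv_all phi (Or phi (WPrev itv_all psi))))) /\
  (* Trigger, lower bound 0 *)
  mht_equiv (Trigger (itv_co 0 n) phi psi)
    (Or (AlwaysBefore (itv_co 0 n) psi) (Trigger itv_all phi psi)) /\
  mht_equiv (Trigger (itv_cc 0 n) phi psi)
    (Or (AlwaysBefore (itv_cc 0 n) psi) (Trigger itv_all phi psi)) /\
  mht_equiv (Trigger (itv_oo 0 n) phi psi)
    (Or (AlwaysBefore (itv_oo 0 n) psi) (Trigger itv_all phi (Or phi (WPrev itv_all psi)))) /\
  mht_equiv (Trigger (itv_oc 0 n) phi psi)
    (Or (AlwaysBefore (itv_oc 0 n) psi) (Trigger itv_all phi (Or phi (WPrev itv_all psi)))).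
Proof.
  repeat match goal with |- _ /\ _ => split end.
  all: solve_case.
Qed.
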